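(* Let $(X,d)$ be a metric space and let $u\in F_{USCG}(X)$. Then $P_0(u)=P(u)$, and $P(u)$ is at most countable.
   Context: A fuzzy set on $X$ is a function $u:X\to[0,1]$, with $\alpha$-cuts $[u]_\alpha=\{x: u(x)\ge\alpha\}$ for $\alpha\in(0,1]$ and $[u]_0=\overline{\{u>0\}}$. $F_{USC}(X)$ is the set of fuzzy sets with all $\alpha$-cuts ($\alpha\in[0,1]$) non-empty and closed; $F_{USCG}(X)=\{u\in F_{USC}(X): [u]_\alpha \text{ is compact for all } \alpha\in(0,1]\}$. $H$ denotes the Hausdorff metric on non-empty closed subsets of $X$: $H(U,V)=\max\{\sup_{u\in U}d(u,V),\sup_{v\in V}d(v,U)\}$. A number $\alpha\in(0,1)$ is a platform point of $u$ if $\overline{\{u>\alpha\}}\subsetneqq[u]_\alpha$; $P(u)$ is the set of platform points of $u$. $P_0(u)=\{\alpha\in(0,1): \lim_{\beta\to\alpha}H([u]_\beta,[u]_\alpha)\neq 0\}$, i.e. the set of $\alpha\in(0,1)$ at which it is not the case that $H([u]_\beta,[u]_\alpha)\to0$ as $\beta\to\alpha$. *)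

(* Defs.v *)
(* R : realType, (X, d) : metricType R with d = mdist. *)
From HB Require Import structures.
From mathcomp Require Import all_boot all_order all_algebra.
From mathcomp Require Import all_classical all_reals all_analysis.
Set Implicit Arguments. Unset Strict Implicit. Unset Printing Implicit Defensive.
Import Order.TTheory GRing.Theory Num.Theory.
Import numFieldNormedType.Exports.
Local Open Scope classical_set_scope.
Local Open Scope ring_scope.

Section Fuzzy.
Context {R : realType} {X : metricType R}.

Definition fuzzy_set (u : X -> R) : Prop := forall x, 0 <= u x <= 1.

Definition cut (u : X -> R) (a : R) : set X :=
  if a == 0 then closure [set x | 0 < u x] else [set x | a <= u x].

Definition F_USC (u : X -> R) : Prop :=
  fuzzy_set u /\
  forall a : R, 0 <= a <= 1 -> cut u a !=set0 /\ closed (cut u a).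

Definition F_USCG (u : X -> R) : Prop :=
  F_USC u /\ forall a : R, 0 < a <= 1 -> compact (cut u a).

Definition dist_set (x : X) (V : set X) : \bar R :=
  ereal_inf [set (mdist x v)%:E | v in V].

Definition hausdorff_dist (U V : set X) : \bar R :=
  maxe (ereal_sup [set dist_set x V | x in U])
       (ereal_sup [set dist_set y U | y in V]).

Definition platform_points (u : X -> R) : set R :=
  [set a | 0 < a < 1 /\ closure [set x | a < u x] `<` cut u a].

Definition P0_points (u : X -> R) : set R :=
  [set a | 0 < a < 1 /\
     ~ ((fun b => hausdorff_dist (cut u b) (cut u a)) @ a^' --> (0 : \bar R))].

End Fuzzy.

(* Main.v *)
Require Import Defs.
From HB Require Import structures.
From mathcomp Require Import all_boot all_order all_algebra.
From mathcomp Require Import all_classical all_reals all_analysis.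
From mathcomp Require Import lra.
Import Order.TTheory GRing.Theory Num.Theory.
Import numFieldNormedType.Exports.
Local Open Scope classical_set_scope.
Local Open Scope ring_scope.
Section S.
Context {R : realType} {X : metricType R}.

Lemma dist_set_le (x : X) {V : set X} {v} : V v -> (dist_set x V <= (mdist x v)%:E)%E.
Proof. by move=> Vv; apply: ge_ereal_inf; exists (mdist x v)%:E => //; exists v. Qed.

Lemma dist_set_ge0 (x : X) (V : set X) : (0 <= dist_set x V)%E.
Proof. by apply: le_ereal_inf_tmp => _ [v Vv <-]; rewrite lee_fin mdist_ge0. Qed.

Lemma haus_le (U V : set X) (e : R) :
  (forall x, U x -> exists y, V y /\ mdist x y < e) ->
  (forall y, V y -> exists x, U x /\ mdist y x < e) ->
  (hausdorff_dist U V <= e%:E)%E.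
Proof.
move=> hU hV; rewrite /hausdorff_dist ge_max; apply/andP; split.
  apply: ge_ereal_sup => _ [x Ux <-]; have [y [Vy xy]] := hU x Ux.
  by rewrite (le_trans (dist_set_le x Vy))// lee_fin ltW.
apply: ge_ereal_sup => _ [x Ux <-]; have [y [Vy xy]] := hV x Ux.
by rewrite (le_trans (dist_set_le x Vy))// lee_fin ltW.
Qed.

Lemma haus_ge0 (U V : set X) : V !=set0 -> (0 <= hausdorff_dist U V)%E.
Proof.
move=> [y Vy]; rewrite /hausdorff_dist le_max; apply/orP; right.
apply: le_ereal_sup_tmp; exists (dist_set y U); first by exists y.
exact: dist_set_ge0.
Qed.

Lemma haus_ge (U V : set X) (y : X) (r : R) : V y ->
  (forall z, U z -> r <= mdist y z) -> (r%:E <= hausdorff_dist U V)%E.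
Proof.
move=> Vy hr; rewrite /hausdorff_dist le_max; apply/orP; right.
apply: le_ereal_sup_tmp; exists (dist_set y U); first by exists y.
by apply: le_ereal_inf_tmp => _ [z Uz <-]; rewrite lee_fin hr.
Qed.


Section U.
Variables (u : X -> R) (hu : F_USCG u).

Lemma cutE b : b != 0 -> Defs.cut u b = [set x | b <= u x].
Proof. by move=> h; rewrite /Defs.cut (negbTE h). Qed.

Lemma u_ge0 x : 0 <= u x.
Proof. by have /andP[] := hu.1.1 x. Qed.

Lemma open_lt c : 0 < c <= 1 -> open [set x | u x < c].
Proof.
move=> /andP[c0 c1].
have [_ cl] := hu.1.2 c (introT andP (conj (ltW c0) c1)).
rewrite cutE ?gt_eqF// in cl.
suff -> : [set x | u x < c] = ~` [set x | c <= u x] by exact: closed_openC.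
by apply/seteqP; split => x /=; rewrite ltNge => /negP.
Qed.


Lemma cut_ne a : 0 <= a <= 1 -> Defs.cut u a !=set0.
Proof. by move=> h; have [] := hu.1.2 a h. Qed.

Lemma near_small a e : 0 < a -> a < 1 ->
  Defs.cut u a `<=` closure [set x | a < u x] -> 0 < e ->
  \forall b \near a^',
    (0 <= hausdorff_dist (Defs.cut u b) (Defs.cut u a) <= e%:E)%E.
Proof.
move=> a0 a1 hcl e0.
pose b0 := a / 2.
have b00 : 0 < b0 by rewrite divr_gt0.
have b0a : b0 < a by rewrite /b0 ltr_pdivrMr// ltr_pMr// ltr1n.
have b01 : b0 <= 1 by rewrite ltW// (lt_trans b0a).
have cK : compact (Defs.cut u b0) by apply: hu.2; rewrite b00 b01.
pose P := fun b y => (b <= u y -> exists z, a <= u z /\ mdist y z < e) /\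
                     (a <= u y -> exists z, b <= u z /\ mdist y z < e).
have e20 : 0 < e / 2 by rewrite divr_gt0.
have hcov : forall x, Defs.cut u b0 x ->
    \forall x' \near x & i \near a^', P i x'.
  move=> x Kx; case: (ltP (u x) a) => [uxa | aux].
    pose c := (u x + a) / 2.
    have uxc : u x < c by rewrite /c; lra.
    have ca : c < a by rewrite /c; lra.
    exists ([set y | u y < c], [set b | c < b]); first split.
    - apply: open_nbhs_nbhs; split => //; apply: open_lt.
      by rewrite (le_lt_trans (u_ge0 x) uxc) /= ltW// (lt_trans ca).
    - by apply: nbhs_dnbhs; exact: lt_nbhsr.
    move=> [y b] /= [uyc cb]; split => h; exfalso.
      by have := lt_le_trans cb h; rewrite ltNge (ltW uyc).
    by have := lt_trans uyc ca; rewrite ltNge h.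
  have xa : Defs.cut u a x by rewrite cutE ?gt_eqF.
  have [z [/= azu xz]] := hcl x xa (ball x (e / 2)) (nbhsx_ballx x (e / 2) e20).
  exists (ball x (e / 2), [set b | b < u z]); first split.
  - exact: nbhsx_ballx.
  - by apply: nbhs_dnbhs; exact: lt_nbhsl.
  move=> [y b] /= [xy bz]; rewrite ballEmdist /= in xy; rewrite ballEmdist /= in xz.
  split => _.
    exists x; split => //; rewrite metric_sym (lt_trans xy)//.
    by rewrite ltr_pdivrMr// ltr_pMr// ltr1n.
  exists z; split; first exact: ltW.
  rewrite (le_lt_trans (metric_triangle _ x _))// [e]splitr ltrD//.
  by rewrite metric_sym.
have hnear : \forall b \near a^', Defs.cut u b0 `<=` P b.
  by move/compact_near_coveringP: cK; rewrite /near_covering; apply.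
near=> b.
have : b \in `]b0, 1[.
  near: b; apply: nbhs_dnbhs; apply: near_in_itvoo.
  by rewrite in_itv /= b0a a1.
rewrite in_itv /= => /andP[b0b b1].
have hP : Defs.cut u b0 `<=` P b by near: b.
have bn0 : b != 0 by rewrite gt_eqF// (lt_trans b00).
apply/andP; split; first by apply: haus_ge0; apply: cut_ne; rewrite ltW// ltW.
apply: haus_le.
  move=> x; rewrite cutE// => bx.
  have Kx : Defs.cut u b0 x by rewrite cutE ?gt_eqF// /= (le_trans (ltW b0b)).
  have [+ _] := hP x Kx => /(_ bx) [z [az xz]].
  by exists z; split => //; rewrite cutE ?gt_eqF.
move=> y; rewrite cutE ?gt_eqF// => ay.
have Ky : Defs.cut u b0 y by rewrite cutE ?gt_eqF// /= (le_trans (ltW b0a)).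
have [_ ] := hP y Ky => /(_ ay) [z [bz yz]].
by exists z; split => //; rewrite cutE.
Unshelve. all: by end_near.
Qed.


Lemma cvg0 a : 0 < a -> a < 1 ->
  Defs.cut u a `<=` closure [set x | a < u x] ->
  (fun b => hausdorff_dist (Defs.cut u b) (Defs.cut u a)) @ a^' --> (0 : \bar R).
Proof.
move=> a0 a1 hcl; apply/fine_cvgP; split.
  apply: filterS (@near_small a 1 a0 a1 hcl ltr01) => b /andP[h0 h1].
  by rewrite ge0_fin_numE// (le_lt_trans h1)// ltry.
apply/cvgrPdist_le => e e0; apply: filterS (@near_small a e a0 a1 hcl e0).
move=> b /andP[h0 h1] /=.
have hf : hausdorff_dist (Defs.cut u b) (Defs.cut u a) \is a fin_num.
  by rewrite ge0_fin_numE// (le_lt_trans h1)// ltry.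
by rewrite sub0r normrN ger0_norm ?fine_ge0// -lee_fin fineK.
Qed.


Lemma clos_sub a : 0 < a -> a <= 1 -> closure [set x | a < u x] `<=` Defs.cut u a.
Proof.
move=> a0 a1; have [_ cla] := hu.1.2 a (introT andP (conj (ltW a0) a1)).
rewrite ((closure_id _).1 cla); apply: closureS => x /= ax.
by rewrite cutE ?gt_eqF // /= ltW.
Qed.

Lemma P0P a : P0_points u a <-> platform_points u a.
Proof.
split.
  move=> [ha h]; split => //; move/andP: ha => [a0 a1].
  split; first exact: clos_sub a0 (ltW a1).
  by move=> hsub; apply: h; exact: cvg0.
move=> [ha [_ hn]]; split => //; move/andP: ha => [a0 a1].
have [x [xa xn]] : exists x, Defs.cut u a x /\ ~ closure [set x | a < u x] x.
  apply: contrapT => hne; apply: hn => x xa; apply: contrapT => xn.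
  by apply: hne; exists x.
have [r r0 hr] : exists2 r, 0 < r & forall z, a < u z -> r <= mdist x z.
  move: xn; rewrite /closure /= => /existsNP [B /not_implyP [nB hB]].
  have [r r0 rB] := (nbhs_ballP _ _).1 nB.
  exists r => // z az; rewrite leNgt; apply/negP => xz; apply: hB.
  by exists z; split => //; apply: rB; rewrite ballEmdist.
move=> /fine_cvgP [hfin hcv].
move/cvgrPdist_lt : hcv => /(_ r r0) hn2.
have hall : \forall b \near a^',
    hausdorff_dist (Defs.cut u b) (Defs.cut u a) \is a fin_num /\
    `|0 - fine (hausdorff_dist (Defs.cut u b) (Defs.cut u a))| < r.
  by apply: filterI.
rewrite /dnbhs /within /= in hall.
have [d d0 hd] := (nbhs_ballP _ _).1 hall.
pose b := a + d / 2.
have ab : a < b by rewrite /b ltrDl divr_gt0.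
have bb : ball a d b.
  by rewrite /ball /= /b opprD addrA subrr sub0r normrN ger0_norm ?divr_ge0 ?ltW// ltr_pdivrMr// ltr_pMr// ltr1n.
have [fb lb] := hd b bb (negbT (gt_eqF ab)).
have ge : (r%:E <= hausdorff_dist (Defs.cut u b) (Defs.cut u a))%E.
  apply: (@haus_ge _ _ x r xa) => z; rewrite cutE ?gt_eqF ?(lt_trans a0)// => bz.
  by apply: hr; exact: lt_le_trans bz.
move: ge; rewrite -(fineK fb) lee_fin => ge.
by move: lb => /=; rewrite sub0r normrN ltNge (le_trans ge)// ler_norm.
Qed.

End U.

Lemma fin_sep (K : set X) (A : set R) (h : R -> X) (e : R) : compact K -> 0 < e ->
  (forall a, A a -> K (h a)) ->
  (forall a b, A a -> A b -> mdist (h a) (h b) < e -> a = b) -> countable A.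
Proof.
move=> cK e0 hK hsep.
have e20 : 0 < e / 2 by rewrite divr_gt0.
pose B := fun T : seq X => [set S : seq X | {subset T <= S}].
pose F := filter_from setT B.
have FF : Filter F.
  apply: filter_from_filter; first by exists [::].
  move=> i j _ _; exists (i ++ j) => // S /= hS.
  by split => z zi; apply: hS; rewrite mem_cat zi ?orbT.
have [T _ hT] : \forall S \near F,
    K `<=` (fun y => has (fun z => mdist z y < e / 2) S).
  move/compact_near_coveringP: cK; rewrite /near_covering; apply => x Kx.
  exists (ball x (e / 2), B [:: x]); first split.
  - exact: nbhsx_ballx.
  - by exists [:: x].
  move=> [y S] /= [xy hS]; apply/hasP; exists x; first by apply: hS; rewrite mem_head.
  by rewrite ballEmdist in xy.
have cov := hT T (fun z => id).
apply/countable_injP.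
exists (fun a => find (fun z => mdist z (h a) < e / 2) T) => a b /set_mem Aa /set_mem Ab /= eqf.
have ha := nth_find (h a) (cov _ (hK a Aa)).
have hb := nth_find (h a) (cov _ (hK b Ab)).
rewrite -eqf in hb.
apply: hsep => //.
move: ha hb; set z := nth (h a) T _ => ha hb.
rewrite (le_lt_trans (metric_triangle _ z _))//.
by rewrite [e]splitr ltrD// metric_sym.
Qed.


Section U2.
Variables (u : X -> R) (hu : F_USCG u).

Lemma plat_pt a : platform_points u a -> exists x r, 0 < r /\ u x = a /\
  (forall y, mdist x y < r -> u y <= a).
Proof.
move=> [/andP[a0 a1] [_ hn]].
have [x [xa xn]] : exists x, Defs.cut u a x /\ ~ closure [set x | a < u x] x.
  apply: contrapT => hne; apply: hn => x xa; apply: contrapT => xn.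
  by apply: hne; exists x.
have [r r0 hr] : exists2 r, 0 < r & forall z, a < u z -> r <= mdist x z.
  move: xn; rewrite /closure /= => /existsNP [B /not_implyP [nB hB]].
  have [r r0 rB] := (nbhs_ballP _ _).1 nB.
  exists r => // z az; rewrite leNgt; apply/negP => xz; apply: hB.
  by exists z; split => //; apply: rB; rewrite ballEmdist.
exists x, r; split => //; split.
  rewrite cutE ?gt_eqF// in xa.
  apply/eqP; rewrite eq_le xa andbT leNgt; apply/negP.
  by move=> /hr; rewrite mdistxx leNgt r0.
by move=> y xy; rewrite leNgt; apply/negP => /hr; rewrite leNgt xy.
Qed.

Lemma count_P : countable (platform_points u).
Proof.
have [x0 _] := @cut_ne u hu 1 (introT andP (conj (@ler01 R) (lexx 1))).
pose T (nk : nat * nat) := [set a | platform_points u a /\ nk.1.+1%:R^-1 <= a /\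
  exists x, u x = a /\ forall y, mdist x y < nk.2.+1%:R^-1 -> u y <= a].
apply: (@sub_countable _ _ _ (\bigcup_(nk in [set: nat * nat]) T nk)).
  apply: subset_card_le => a Pa.
  have [x [r [r0 [uxa hr]]]] := @plat_pt a Pa.
  have a0 : 0 < a by case: Pa => /andP[].
  have [n hn] : exists n, n.+1%:R^-1 <= a.
    have [n hn] := ltr_add_invr a0; exists n; rewrite add0r in hn; exact: ltW.
  have [k hk] : exists k, k.+1%:R^-1 <= r.
    have [k hk] := ltr_add_invr r0; exists k; rewrite add0r in hk; exact: ltW.
  exists (n, k) => //; split => //; split => //; exists x; split => // y xy.
  by apply: hr; exact: lt_le_trans xy hk.
apply: bigcup_countable => // nk _.
have hc : forall a, exists x, T nk a -> u x = a /\
    forall y, mdist x y < nk.2.+1%:R^-1 -> u y <= a.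
  move=> a; have [Ta|nTa] := pselect (T nk a); last by exists x0.
  by have [_ [_ [x hx]]] := Ta; exists x.
have [h hh] := choice hc.
have c0 : 0 < nk.1.+1%:R^-1 :> R by rewrite invr_gt0.
apply: (@fin_sep (Defs.cut u nk.1.+1%:R^-1) _ h nk.2.+1%:R^-1).
- apply: hu.2; rewrite c0 /= invf_le1// ler1n//.
- by rewrite invr_gt0.
- move=> a Ta; rewrite cutE ?gt_eqF//= (hh a Ta).1.
  by have [_ []] := Ta.
move=> a b Ta Tb d; case: (ltgtP a b) => // ab; exfalso.
  have := (hh a Ta).2 (h b) d; rewrite (hh b Tb).1 leNgt ab //.
have := (hh b Tb).2 (h a); rewrite metric_sym => /(_ d).
by rewrite (hh a Ta).1 leNgt ab.
Qed.

End U2.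

End S.

Theorem lemma3p5 (R : realType) (X : metricType R) (u : X -> R) :
  F_USCG u -> P0_points u = platform_points u /\ countable (platform_points u).
Proof.
move=> hu; split; last exact: count_P.
by apply/seteqP; split => a /= /(P0P u hu a).
Qed.
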